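(* Let $n\ge3$, $K,H\le\mathbb{H}^\times$ finite with $[K,K]\le H\trianglelefteq K$, and let $P\le G_n(K,H)$ be a parabolic subgroup. Then there is a parabolic triple $(I_0,\Pi,\xi)$ with $P=P_{(I_0,\Pi,\xi)}$.
   Context: $\mathbb{H}$: quaternions. $A_n(K,H)$ is the group of diagonal matrices $\mathrm{diag}(k_1,\dots,k_n)$ with $k_i\in K$, $k_1\cdots k_n\in H$; $G_n(K,H)$ is the group generated by $A_n(K,H)$ and all $n\times n$ permutation matrices $M(\sigma)$, acting on $\mathbb{H}^n$ (column vectors, standard basis $e_1,\dots,e_n$) by left multiplication. A parabolic subgroup is the pointwise stabilizer in $G_n(K,H)$ of a subset of $\mathbb{H}^n$. A parabolic triple is $(I_0,\Pi,\xi)$ with $I_0\subseteq I=\{1,\dots,n\}$ (required empty if $K=\{1\}$), $\Pi=(I_1,\dots,I_d)$ a set partition of $I\setminus I_0$, and $\xi:I\setminus I_0\to K$. Let $D_\xi$ be the diagonal matrix with entry $\xi(j)$ for $j\notin I_0$ and $1$ for $j\in I_0$. Then $P_{(I_0,\Pi,\xi)}=P_0\times P_1\times\dots\times P_d$, where $P_0$ is $G_{|I_0|}(K,H)$ acting on the coordinates indexed by $I_0$ and trivially on the others (omitted if $I_0=\emptyset$), and $P_i=\{D_\xi M(\sigma)D_\xi^{-1}:\sigma\in\mathrm{Sym}(I_i)\}$ (the symmetric group permuting the vectors $\xi(j)e_j$, $j\in I_i$). *)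

(* Defs.v *)
From HB Require Import structures.
From mathcomp Require Import all_boot all_order all_algebra all_fingroup.
From mathcomp Require Import reals.
From mathcomp Require Import ring.
Set Implicit Arguments.
Unset Strict Implicit.
Unset Printing Implicit Defensive.
Import Order.TTheory GRing.Theory Num.Theory.
Local Open Scope ring_scope.

Record quat (R : Type) := Quat { qr : R; qi : R; qj : R; qk : R }.

Definition quat2tup (R : Type) (q : quat R) := (qr q, qi q, qj q, qk q).
Definition tup2quat (R : Type) (t : R * R * R * R) :=
  let: (a, b, c, d) := t in Quat a b c d.
Lemma quat2tupK (R : Type) : cancel (@quat2tup R) (@tup2quat R).
Proof. by case. Qed.

HB.instance Definition _ (R : eqType) := Equality.copy (quat R) (can_type (@quat2tupK R)).
HB.instance Definition _ (R : choiceType) := Choice.copy (quat R) (can_type (@quat2tupK R)).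

Definition qzero (R : comNzRingType) : quat R := Quat 0 0 0 0.
Definition qone (R : comNzRingType) : quat R := Quat 1 0 0 0.
Definition qopp (R : comNzRingType) (x : quat R) : quat R :=
  Quat (- qr x) (- qi x) (- qj x) (- qk x).
Definition qadd (R : comNzRingType) (x y : quat R) : quat R :=
  Quat (qr x + qr y) (qi x + qi y) (qj x + qj y) (qk x + qk y).
(* Hamilton product, i^2 = j^2 = k^2 = ijk = -1 *)
Definition qmul (R : comNzRingType) (x y : quat R) : quat R :=
  Quat (qr x * qr y - qi x * qi y - qj x * qj y - qk x * qk y)
       (qr x * qi y + qi x * qr y + qj x * qk y - qk x * qj y)
       (qr x * qj y - qi x * qk y + qj x * qr y + qk x * qi y)
       (qr x * qk y + qi x * qj y - qj x * qi y + qk x * qr y).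

Lemma qaddA (R : comNzRingType) : associative (@qadd R).
Proof. by case=> ? ? ? ?; case=> ? ? ? ?; case=> ? ? ? ?; rewrite /qadd /=; congr Quat; ring. Qed.
Lemma qaddC (R : comNzRingType) : commutative (@qadd R).
Proof. by case=> ? ? ? ?; case=> ? ? ? ?; rewrite /qadd /=; congr Quat; ring. Qed.
Lemma qadd0 (R : comNzRingType) : left_id (@qzero R) (@qadd R).
Proof. by case=> ? ? ? ?; rewrite /qadd /=; congr Quat; ring. Qed.
Lemma qaddN (R : comNzRingType) : left_inverse (@qzero R) (@qopp R) (@qadd R).
Proof. by case=> ? ? ? ?; rewrite /qadd /=; congr Quat; ring. Qed.

HB.instance Definition _ (R : comNzRingType) :=
  GRing.isZmodule.Build (quat R) (@qaddA R) (@qaddC R) (@qadd0 R) (@qaddN R).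

Lemma qmulA (R : comNzRingType) : associative (@qmul R).
Proof. by case=> ? ? ? ?; case=> ? ? ? ?; case=> ? ? ? ?; rewrite /qmul /=; congr Quat; ring. Qed.
Lemma qmul1 (R : comNzRingType) : left_id (@qone R) (@qmul R).
Proof. by case=> ? ? ? ?; rewrite /qmul /=; congr Quat; ring. Qed.
Lemma qmulr1 (R : comNzRingType) : right_id (@qone R) (@qmul R).
Proof. by case=> ? ? ? ?; rewrite /qmul /=; congr Quat; ring. Qed.
Lemma qmulDl' (R : comNzRingType) : left_distributive (@qmul R) (@qadd R).
Proof. by case=> ? ? ? ?; case=> ? ? ? ?; case=> ? ? ? ?; rewrite /qmul /= /qadd /=; congr Quat; ring. Qed.
Lemma qmulDr' (R : comNzRingType) : right_distributive (@qmul R) (@qadd R).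
Proof. by case=> ? ? ? ?; case=> ? ? ? ?; case=> ? ? ? ?; rewrite /qmul /= /qadd /=; congr Quat; ring. Qed.
Lemma qmulDl (R : comNzRingType) : left_distributive (@qmul R) +%R.
Proof. exact: qmulDl'. Qed.
Lemma qmulDr (R : comNzRingType) : right_distributive (@qmul R) +%R.
Proof. exact: qmulDr'. Qed.
Lemma qone_neq0 (R : comNzRingType) : @qone R != 0.
Proof. apply/eqP => -[] /eqP; by rewrite oner_eq0. Qed.

HB.instance Definition _ (R : comNzRingType) :=
  GRing.Zmodule_isNzRing.Build (quat R) (@qmulA R) (@qmul1 R) (@qmulr1 R)
    (@qmulDl R) (@qmulDr R) (@qone_neq0 R).

(* quaternion inverse  conj(q) / |q|^2  (used only for nonzero q) *)
Definition qinv (R : fieldType) (x : quat R) : quat R :=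
  let N := qr x ^+ 2 + qi x ^+ 2 + qj x ^+ 2 + qk x ^+ 2 in
  Quat (qr x / N) (- qi x / N) (- qj x / N) (- qk x / N).

Definition is_fin_subgroup (R : fieldType) (K : seq (quat R)) : Prop :=
  [/\ (0 : quat R) \notin K, (1 : quat R) \in K,
      {in K &, forall x y, x * y \in K} & {in K, forall x, qinv x \in K}].

(* [K,K] <= H : every commutator of K lies in H (H being a group) *)
Definition qcomm_sub (R : fieldType) (K H : seq (quat R)) : Prop :=
  {in K &, forall x y, x * y * qinv x * qinv y \in H}.

Definition qnormal_sub (R : fieldType) (H K : seq (quat R)) : Prop :=
  {subset H <= K} /\ {in K & H, forall k h, k * h * qinv k \in H}.

(* permutation matrix M(s) : M(s) e_j = e_{s j} *)
Definition Mperm (R : comNzRingType) n (s : 'S_n) : 'M[quat R]_n :=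
  \matrix_(i, j) (i == s j)%:R.
Arguments Mperm {R n} s.

Definition diagA (R : comNzRingType) n (A : {set 'I_n}) (d : 'I_n -> quat R) : 'M[quat R]_n :=
  diag_mx (\row_i (if i \in A then d i else 1)).

(* Generators of the group G_A(K,H) = G_{|A|}(K,H) acting on the coordinates
   indexed by A (identified with 1..|A| in increasing order) and trivially
   elsewhere: the elements of A_{|A|}(K,H) (product of the diagonal entries
   taken in increasing index order) and the permutation matrices of Sym(A). *)
Definition monomial_gen (R : fieldType) n (K H : seq (quat R)) (A : {set 'I_n})
    (g : 'M[quat R]_n) : Prop :=
  (exists d : 'I_n -> quat R,
      [/\ forall i, i \in A -> d i \in K,
          \prod_(i in A) d i \in H & g = diagA A d])
  \/ (exists s : 'S_n, perm_on A s /\ g = Mperm s).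

(* subgroup generated (closure under products; the generating set is closed
   under inverses, so this is the generated group) *)
Inductive gen_group (R : fieldType) n (S : 'M[quat R]_n -> Prop) : 'M[quat R]_n -> Prop :=
  | gen_one : gen_group S 1%:M
  | gen_mul g h : S g -> gen_group S h -> gen_group S (g *m h).

Definition G_on (R : fieldType) n (K H : seq (quat R)) (A : {set 'I_n}) :=
  gen_group (monomial_gen K H A).

Definition Gn (R : fieldType) n (K H : seq (quat R)) := G_on K H [set: 'I_n].

Definition pt_stab (R : fieldType) n (K H : seq (quat R)) (X : 'cV[quat R]_n -> Prop)
    (g : 'M[quat R]_n) : Prop :=
  Gn K H g /\ forall v, X v -> g *m v = v.

Definition parabolic (R : fieldType) n (K H : seq (quat R)) (P : 'M[quat R]_n -> Prop) : Prop :=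
  exists X : 'cV[quat R]_n -> Prop, forall g, P g <-> pt_stab K H X g.

Definition parabolic_triple (R : fieldType) n (K : seq (quat R)) (I0 : {set 'I_n})
    (Pi : {set {set 'I_n}}) (xi : 'I_n -> quat R) : Prop :=
  [/\ ((forall k, k \in K -> k = 1) -> I0 = set0),
      partition Pi (~: I0) &
      forall j, j \notin I0 -> xi j \in K].

Definition Dxi (R : fieldType) n (I0 : {set 'I_n}) (xi : 'I_n -> quat R) :=
  diagA (~: I0) xi.
Definition Dxi_inv (R : fieldType) n (I0 : {set 'I_n}) (xi : 'I_n -> quat R) :=
  diagA (~: I0) (fun j => qinv (xi j)).

(* P_(I0,Pi,xi) = P_0 x P_1 x ... x P_d, the (internal) product of
   P_0 = G_{I0}(K,H) and the P_i = { D_xi M(s) D_xi^-1 : s in Sym(I_i) } *)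
Definition P_triple (R : fieldType) n (K H : seq (quat R)) (I0 : {set 'I_n})
    (Pi : {set {set 'I_n}}) (xi : 'I_n -> quat R) (g : 'M[quat R]_n) : Prop :=
  exists g0 : 'M[quat R]_n, exists s : {set 'I_n} -> 'S_n,
    [/\ G_on K H I0 g0,
        forall B, B \in Pi -> perm_on B (s B) &
        g = g0 *m \prod_(B in Pi) (Dxi I0 xi *m Mperm (s B) *m Dxi_inv I0 xi)].

(* Main.v *)
Require Import Defs.
From HB Require Import structures.
From mathcomp Require Import all_boot all_order all_algebra all_fingroup.
From mathcomp Require Import reals boolp ring.
Set Implicit Arguments. Unset Strict Implicit. Unset Printing Implicit Defensive.
Import Order.TTheory GRing.Theory Num.Theory.
Local Open Scope ring_scope.

Section Quat.
Variable R : realType.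
Implicit Types x y z : quat R.

Lemma qnorm_neq0 x : x != 0 ->
  qr x ^+ 2 + qi x ^+ 2 + qj x ^+ 2 + qk x ^+ 2 != 0.
Proof.
case: x => a b c d /= Hx; apply/negP => /eqP H; move/negP: Hx; apply.
have h1 := sqr_ge0 a; have h2 := sqr_ge0 b; have h3 := sqr_ge0 c; have h4 := sqr_ge0 d.
move/eqP: H; rewrite paddr_eq0 ?addr_ge0 // => /andP[].
rewrite paddr_eq0 ?addr_ge0 // => /andP[].
rewrite paddr_eq0 ?addr_ge0 // => /andP[].
rewrite !sqrf_eq0 => /eqP-> /eqP-> /eqP-> /eqP->; done.
Qed.

Lemma qinv_r x : x != 0 -> x * qinv x = 1.
Proof.
move=> /qnorm_neq0; case: x => a b c d /= HN.
change (qmul (Quat a b c d) (qinv (Quat a b c d)) = qone R).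
rewrite /qmul /qinv /qone /=; congr Quat; field; exact: HN.
Qed.

Lemma qinv_l x : x != 0 -> qinv x * x = 1.
Proof.
move=> /qnorm_neq0; case: x => a b c d /= HN.
change (qmul (qinv (Quat a b c d)) (Quat a b c d) = qone R).
rewrite /qmul /qinv /qone /=; congr Quat; field; exact: HN.
Qed.

Lemma qinv1 : qinv (1 : quat R) = 1.
Proof.
change (qinv (qone R) = qone R); rewrite /qinv /qone /=; congr Quat.
all: rewrite ?expr1n ?expr0n /= ?addr0 ?divr1 ?oppr0 ?mul0r //.
Qed.

Lemma qmulf_eq0 x y : x != 0 -> x * y = 0 -> y = 0.
Proof.
move=> Hx Hy; by rewrite -[y]mul1r -(qinv_l Hx) -mulrA Hy mulr0.
Qed.

Section Grp.
Variables (n : nat) (K H : seq (quat R)).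
Hypotheses (HK : is_fin_subgroup K) (HH : is_fin_subgroup H)
  (Hc : qcomm_sub K H) (Hn : qnormal_sub H K).

Lemma K1 : (1 : quat R) \in K. Proof. by case: HK. Qed.
Lemma H1 : (1 : quat R) \in H. Proof. by case: HH. Qed.
Lemma KM x y : x \in K -> y \in K -> x * y \in K. Proof. by case: HK => _ _ /(_ x y) h _; apply: h. Qed.
Lemma HM x y : x \in H -> y \in H -> x * y \in H. Proof. by case: HH => _ _ /(_ x y) h _; apply: h. Qed.
Lemma KV x : x \in K -> qinv x \in K. Proof. by case: HK => _ _ _ /(_ x). Qed.
Lemma HV x : x \in H -> qinv x \in H. Proof. by case: HH => _ _ _ /(_ x). Qed.
Lemma K0 x : x \in K -> x != 0. Proof. by case: HK => h _ _ _ xK; apply: contraNneq h => <-. Qed.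
Lemma H0 x : x \in H -> x != 0. Proof. by case: HH => h _ _ _ xK; apply: contraNneq h => <-. Qed.
Lemma HK' x : x \in H -> x \in K. Proof. by case: Hn => h _; apply: h. Qed.

Definition eqH x y := exists2 h, h \in H & x = h * y.

Lemma eqH_refl x : eqH x x. Proof. by exists 1; rewrite ?mul1r // H1. Qed.
Lemma eqH_sym x y : eqH x y -> eqH y x.
Proof.
case=> h hH ->; exists (qinv h); first exact: HV.
by rewrite mulrA qinv_l ?mul1r // H0.
Qed.
Lemma eqH_trans x y z : eqH x y -> eqH y z -> eqH x z.
Proof. case=> h hH -> [h' h'H ->]; exists (h * h'); [exact: HM | by rewrite mulrA]. Qed.
Lemma eqH_mul x x' y y' : x' \in K -> eqH x x' -> eqH y y' -> eqH (x * y) (x' * y').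
Proof.
move=> x'K [h hH ->] [h' h'H ->].
exists (h * (x' * h' * qinv x')).
  apply: HM => //; by case: Hn => _; apply.
by rewrite !mulrA -[h * x' * h' * qinv x' * x']mulrA qinv_l ?mulr1 // K0.
Qed.
Lemma eqH_comm x y : x \in K -> y \in K -> eqH (x * y) (y * x).
Proof.
move=> xK yK; exists (x * y * qinv x * qinv y); first exact: Hc.
by rewrite -!mulrA [qinv y * (y * x)]mulrA qinv_l ?mul1r ?qinv_l ?mulr1 // K0.
Qed.
Lemma eqH_H x : eqH x 1 -> x \in H.
Proof. by case=> h hH ->; rewrite mulr1. Qed.
Lemma H_eqH x : x \in H -> eqH x 1.
Proof. by move=> xH; exists x; rewrite ?mulr1. Qed.

Lemma bigK (I : Type) (r : seq I) (f : I -> quat R) :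
  (forall i, f i \in K) -> \prod_(i <- r) f i \in K.
Proof. move=> fK; apply: (big_ind (fun x => x \in K)) => //; [exact: K1 | exact: KM]. Qed.

Lemma big_eqH_perm (T : eqType) (r r' : seq T) (f : T -> quat R) :
  (forall i, f i \in K) -> perm_eq r r' ->
  eqH (\prod_(i <- r) f i) (\prod_(i <- r') f i).
Proof.
move=> fK; elim: r r' => [|a r IH] r'.
  by rewrite perm_sym => /perm_nilP ->; apply: eqH_refl.
move=> pr; have Ha : a \in r' by rewrite -(perm_mem pr) mem_head.
move: pr; case/splitPr: Ha => r1 r2 pr.
have pr' : perm_eq r (r1 ++ r2).
  by rewrite -(perm_cons a); apply: (perm_trans pr); rewrite -cat1s perm_catCA.
rewrite big_cons big_cat big_cons /= mulrA.
apply: (eqH_trans (y := f a * \prod_(i <- r1) f i * \prod_(i <- r2) f i)).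
  rewrite -mulrA -big_cat; apply: eqH_mul => //; first exact: eqH_refl.
  exact: IH.
apply: eqH_mul; [by apply: KM => //; exact: bigK | | exact: eqH_refl].
apply: eqH_comm => //; exact: bigK.
Qed.

Lemma big_eqH_split (I : Type) (r : seq I) (f g : I -> quat R) :
  (forall i, f i \in K) -> (forall i, g i \in K) ->
  eqH (\prod_(i <- r) (f i * g i)) (\prod_(i <- r) f i * \prod_(i <- r) g i).
Proof.
move=> fK gK; elim: r => [|a r IH]; first by rewrite !big_nil mulr1; apply: eqH_refl.
rewrite !big_cons.
apply: (eqH_trans (y := f a * g a * (\prod_(i <- r) f i * \prod_(i <- r) g i))).
  apply: eqH_mul => //; [exact: KM | exact: eqH_refl].
rewrite -!mulrA; apply: eqH_mul => //; first exact: eqH_refl.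
rewrite !mulrA; apply: eqH_mul; [by apply: KM => //; exact: bigK | | exact: eqH_refl].
apply: eqH_comm => //; exact: bigK.
Qed.

Lemma big_eqH_reindex (t : 'S_n) (f : 'I_n -> quat R) :
  (forall i, f i \in K) -> eqH (\prod_i f (t i)) (\prod_i f i).
Proof.
move=> fK; rewrite -(big_map t xpredT f); apply: big_eqH_perm => //.
apply: uniq_perm; first by rewrite map_inj_uniq ?index_enum_uniq //; exact: perm_inj.
  exact: index_enum_uniq.
move=> i; rewrite mem_index_enum; apply/mapP; exists (t^-1 i)%g.
  by rewrite mem_index_enum. by rewrite permKV.
Qed.

Lemma Qlemma (t : 'S_n) (f : 'I_n -> quat R) :
  (forall i, f i \in K) -> \prod_i (f i * qinv (f (t i))) \in H.
Proof.
move=> fK; apply: eqH_H.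
apply: (eqH_trans (big_eqH_split _ _ _)); [by [] | by move=> i; exact: KV|].
apply: (eqH_trans (y := \prod_i f i * \prod_i qinv (f i))).
  apply: eqH_mul; [exact: bigK | exact: eqH_refl|].
  by apply: (big_eqH_reindex (f := fun i => qinv (f i)) t) => i; exact: KV.
apply: (eqH_trans (y := \prod_i (f i * qinv (f i)))).
  by apply: eqH_sym; apply: big_eqH_split => // i; exact: KV.
rewrite big1; first exact: eqH_refl.
by move=> i _; rewrite qinv_r // K0.
Qed.


Definition mono (d : 'I_n -> quat R) (s : 'S_n) : 'M[quat R]_n :=
  \matrix_(i, j) (if i == s j then d i else 0).

Lemma eq_mono d d' s : d =1 d' -> mono d s = mono d' s.
Proof. by move=> e; apply/matrixP => i j; rewrite !mxE e. Qed.

Lemma mono_mul d e s t :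
  mono d s *m mono e t = mono (fun i => d i * e ((s^-1)%g i)) (t * s)%g.
Proof.
apply/matrixP => i k; rewrite !mxE (bigD1 (t k)) //= big1.
  rewrite !mxE eqxx permM addr0; case: eqP => [->|_]; last by rewrite mul0r.
  by rewrite permK.
move=> j /negbTE jn; rewrite !mxE jn mulr0; done.
Qed.

Lemma mono_vec d s (v : 'cV[quat R]_n) i :
  (mono d s *m v) i 0 = d i * v ((s^-1)%g i) 0.
Proof.
rewrite mxE (bigD1 ((s^-1)%g i)) //= big1.
  by rewrite mxE permKV eqxx addr0.
move=> j jn; rewrite mxE; case: eqP => [ij|]; last by rewrite mul0r.
by move: jn; rewrite ij permK eqxx.
Qed.

Lemma diagA_mono A f : diagA A f = mono (fun i => if i \in A then f i else 1) 1%g.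
Proof.
by apply/matrixP => i j; rewrite !mxE perm1; case: eqP.
Qed.

Lemma Mperm_mono (s : 'S_n) : @Mperm R n s = mono (fun _ => 1) s.
Proof. by apply/matrixP => i j; rewrite !mxE; case: eqP. Qed.

Lemma mono1 : mono (fun _ => 1) 1%g = 1%:M.
Proof. by apply/matrixP => i j; rewrite !mxE perm1; case: eqP. Qed.

Lemma Mperm_mul (s t : 'S_n) : @Mperm R n s *m Mperm t = Mperm (t * s)%g.
Proof. by rewrite !Mperm_mono mono_mul; apply: eq_mono => i; rewrite mulr1. Qed.

Lemma Mperm1 : @Mperm R n 1%g = 1%:M.
Proof. by rewrite Mperm_mono mono1. Qed.


Lemma gen_mulmx (S : 'M[quat R]_n -> Prop) g h :
  gen_group S g -> gen_group S h -> gen_group S (g *m h).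
Proof.
elim=> [|a b Sa _ IH] Hh; first by rewrite mul1mx.
rewrite -mulmxA; exact: (gen_mul Sa (IH Hh)).
Qed.

Lemma G_on_Gn (A : {set 'I_n}) (g : 'M[quat R]_n) : G_on K H A g -> Gn K H g.
Proof.
rewrite /Gn /G_on; elim=> [|a b Sa _ IH]; first exact: gen_one.
apply: gen_mul IH; case: Sa => [[d [dK dH ->]]|[s [_ ->]]].
  left; exists (fun i => if i \in A then d i else 1); split.
  - by move=> i _; case: ifP => [iA|_]; [exact: dK | exact: K1].
  - rewrite (eq_bigl xpredT) => [|i]; last by rewrite in_setT.
    by rewrite -big_mkcond.
  by rewrite !diagA_mono; apply: eq_mono => i; rewrite in_setT.
right; exists s; split => //; apply/subsetP => x; by rewrite in_setT.
Qed.

Lemma G_on_mono (A : {set 'I_n}) (d : 'I_n -> quat R) (s : 'S_n) :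
  (forall i, i \in A -> d i \in K) -> \prod_(i in A) d i \in H -> perm_on A s ->
  G_on K H A (diagA A d *m Mperm s).
Proof.
move=> dK dH sA; apply: gen_mul; first by left; exists d.
rewrite -[Mperm s]mulmx1; apply: gen_mul; last exact: gen_one.
by right; exists s.
Qed.

Lemma Gn_mono (d : 'I_n -> quat R) (s : 'S_n) :
  (forall i, d i \in K) -> \prod_i d i \in H -> Gn K H (mono d s).
Proof.
move=> dK dH.
have -> : mono d s = diagA [set: 'I_n] d *m Mperm s.
  rewrite diagA_mono Mperm_mono mono_mul mulg1; apply: eq_mono => i.
  by rewrite in_setT mulr1.
apply: G_on_mono => //; last by apply/subsetP => x; rewrite in_setT.
by rewrite (eq_bigl xpredT) // => i; rewrite in_setT.
Qed.

Lemma G_on_form (A : {set 'I_n}) (g : 'M[quat R]_n) : G_on K H A g ->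
  exists d s, [/\ forall i, d i \in K, forall i, i \notin A -> d i = 1,
     \prod_i d i \in H, perm_on A s & g = mono d s].
Proof.
rewrite /G_on; elim=> [|a b Sa _ [d [s [dK dA dH sA ->]]]].
  exists (fun _ => 1), 1%g; split => //; first by move=> _; exact: K1.
  - by rewrite big1 //; exact: H1.
  - by apply/subsetP => x; rewrite inE perm1 eqxx.
  - by rewrite mono1.
case: Sa => [[e [eK eH ->]]|[t [tA ->]]].
  exists (fun i => (if i \in A then e i else 1) * d i), s; split => //.
  - by move=> i; apply: KM => //; case: ifP => ?; [exact: eK | exact: K1].
  - by move=> i iA; rewrite (negbTE iA) mul1r dA.
  - apply: eqH_H; apply: (eqH_trans (big_eqH_split _ _ _)) => //.
    + by move=> i; case: ifP => ?; [exact: eK | exact: K1].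
    have e1 : eqH (\prod_i (if i \in A then e i else 1)) 1.
      by apply: H_eqH; rewrite -big_mkcond.
    by have := eqH_mul K1 e1 (H_eqH dH); rewrite mulr1.
  by rewrite diagA_mono mono_mul mulg1; apply: eq_mono => i; rewrite invg1 perm1.
exists (fun i => d ((t^-1)%g i)), (s * t)%g; split => //.
- by move=> i iA; rewrite (out_perm (perm_onV tA) iA) dA.
- apply: eqH_H; apply: (eqH_trans (big_eqH_reindex _ _)) => //.
  exact: H_eqH.
- exact: perm_onM.
by rewrite Mperm_mono mono_mul; apply: eq_mono => i; rewrite mul1r.
Qed.


Definition rfun (t : 'S_n) (B : {set 'I_n}) (x : 'I_n) := if x \in B then t x else x.
Definition restr (t : 'S_n) (B : {set 'I_n}) : 'S_n :=
  insubd (1%g : 'S_n) [ffun y => rfun t B y].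

Definition stable (t : 'S_n) (B : {set 'I_n}) := forall y : 'I_n, (t y \in B) = (y \in B).

Lemma restr_on t B : perm_on B (restr t B).
Proof.
apply/subsetP => x; rewrite inE; apply: contraR => xB.
rewrite -pvalE /restr val_insubd; case: ifP => _.
  by rewrite ffunE /rfun (negbTE xB).
by rewrite pvalE perm1.
Qed.

Lemma restrE t B (x : 'I_n) : stable t B -> restr t B x = rfun t B x.
Proof.
move=> st; rewrite -pvalE /restr val_insubd.
have -> : injectiveb [ffun y => rfun t B y].
  apply/injectiveP => a b; rewrite !ffunE /rfun.
  case: ifP => aB; case: ifP => bB.
  - exact: perm_inj.
  - by move=> e; move: bB; rewrite -e st aB.
  - by move=> e; move: aB; rewrite e st bB.
  - done.
by rewrite ffunE.
Qed.

Lemma prod_restr t (bs : seq {set 'I_n}) :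
  (forall B, B \in bs -> stable t B) -> uniq bs ->
  (forall B C, B \in bs -> C \in bs -> B != C -> [disjoint B & C]) ->
  \prod_(B <- bs) @Mperm R n (restr t B) = Mperm (restr t (\bigcup_(B <- bs) B)).
Proof.
elim: bs => [|B bs IH] st ubs dis.
  rewrite !big_nil; transitivity (@Mperm R n 1%g); first by rewrite Mperm1.
  congr Mperm; apply/permP => x.
  rewrite restrE; first by rewrite perm1 /rfun inE.
  by move=> y; rewrite !inE.
have stU : forall bs', (forall C, C \in bs' -> stable t C) -> stable t (\bigcup_(C <- bs') C).
  elim=> [|C bs' IH'] h y; first by rewrite big_nil !inE.
  rewrite !big_cons !inE h ?mem_head // IH' // => C' C'in.
  by apply: h; rewrite inE C'in orbT.
have stB : stable t B by apply: st; rewrite mem_head.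
have stT : forall C, C \in bs -> stable t C by move=> C Cin; apply: st; rewrite inE Cin orbT.
move: ubs => /= /andP[Bn ubs].
rewrite big_cons IH // ?big_cons; last first.
  by move=> C D Cin Din; apply: dis; rewrite inE ?Cin ?Din orbT.
have disU : forall x : 'I_n, x \in B -> x \notin \bigcup_(C <- bs) C.
  move=> x xB; rewrite bigcup_seq; apply/negP => /bigcupP [C Cin xC].
  have CB : C \in B :: bs by rewrite inE Cin orbT.
  have := dis B C (mem_head _ _) CB.
  have -> : B != C by apply: contraNneq Bn => ->.
  by move=> /(_ isT) dBC; move: (disjointFr dBC xB); rewrite xC.
rewrite [_ * _]Mperm_mul; congr Mperm; apply/permP => x.
have stU' := stU _ stT.
have stBU : stable t (B :|: \bigcup_(C <- bs) C) by move=> y; rewrite !inE stB stU'.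
rewrite permM !restrE // /rfun !inE.
case: (boolP (x \in B)) => xB /=.
  by rewrite (negbTE (disU _ xB)) xB.
case xU: (x \in \bigcup_(C <- bs) C); last by rewrite (negbTE xB).
by have := disU (t x); rewrite stU' xU; case: (t x \in B) => // /(_ isT).
Qed.


Lemma qcancel_r (a b c : quat R) : c != 0 -> a * c = b * c -> a = b.
Proof. by move=> c0 e; rewrite -[a]mulr1 -[b]mulr1 -(qinv_r c0) !mulrA e. Qed.

Lemma H_div (a b : quat R) : a * b \in H -> b \in H -> a \in H.
Proof.
move=> abH bH; have -> : a = a * b * qinv b by rewrite -mulrA qinv_r ?mulr1 // H0.
by apply: HM => //; exact: HV.
Qed.

Lemma eqH_inH (a b : quat R) : eqH a b -> a \in H -> b \in H.
Proof. move=> e aH; apply: eqH_H; apply: eqH_trans (eqH_sym e) (H_eqH aH). Qed.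

Variable X : 'cV[quat R]_n -> Prop.

Definition Rel (i j : 'I_n) : bool :=
  `[< exists k, k \in K /\ forall v, X v -> v i 0 = k * v j 0 >].

Lemma RelP i j : reflect (exists k, k \in K /\ forall v, X v -> v i 0 = k * v j 0) (Rel i j).
Proof. exact: asboolP. Qed.

Lemma Rel_refl i : Rel i i.
Proof. by apply/RelP; exists 1; split; [exact: K1 | move=> v _; rewrite mul1r]. Qed.

Lemma Rel_sym i j : Rel i j -> Rel j i.
Proof.
case/RelP => k [kK hk]; apply/RelP; exists (qinv k); split; first exact: KV.
by move=> v Xv; rewrite hk // mulrA qinv_l ?mul1r // K0.
Qed.

Lemma Rel_trans i j l : Rel i j -> Rel j l -> Rel i l.
Proof.
case/RelP => k [kK hk] /RelP [k' [k'K hk']]; apply/RelP; exists (k * k'); split.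
  exact: KM.
by move=> v Xv; rewrite hk // hk' // mulrA.
Qed.

Lemma Rel_equiv : equivalence_rel Rel.
Proof.
move=> x y z; split; first exact: Rel_refl.
move=> xy; apply/idP/idP => h; first exact: Rel_trans (Rel_sym xy) h.
exact: Rel_trans xy h.
Qed.

Definition Ktriv := all (fun k => k == 1) K.
Definition Z := [set j : 'I_n | `[< forall v, X v -> v j 0 = 0 >]].
Definition I0 := if Ktriv then set0 else Z.
Definition D := ~: I0.
Definition Pi := equivalence_partition Rel D.
Definition rep (j : 'I_n) := odflt j [pick y | Rel j y && (y \in D)].
Definition xi (j : 'I_n) : quat R :=
  match pselect (exists k, k \in K /\ forall v, X v -> v j 0 = k * v (rep j) 0) with
  | left e => sval (cid e)
  | right _ => 1
  end.

Lemma Rel_rep j : Rel j (rep j).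
Proof.
rewrite /rep; case: pickP => [y /andP[] //|_]; exact: Rel_refl.
Qed.

Lemma xiP j : xi j \in K /\ forall v, X v -> v j 0 = xi j * v (rep j) 0.
Proof.
rewrite /xi; case: pselect => [e|ne]; first by case: (cid e).
by case: ne; apply/RelP; exact: Rel_rep.
Qed.

Lemma xiK j : xi j \in K. Proof. by case: (xiP j). Qed.

Lemma rep_eq i j : i \in D -> Rel i j -> rep i = rep j.
Proof.
move=> iD ij; rewrite /rep.
have -> : [pick y | Rel i y & y \in D] = [pick y | Rel j y & y \in D].
  by apply: eq_pick => y /=; rewrite (Rel_equiv i j y).
case: pickP => // /(_ i); by rewrite (Rel_sym ij) iD.
Qed.

Lemma rep_D j : j \in D -> rep j \in D.
Proof.
move=> jD; rewrite /rep; case: pickP => [y /andP[] //|/(_ j)].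
by rewrite Rel_refl jD.
Qed.

Lemma I0_zero j v : j \in I0 -> X v -> v j 0 = 0.
Proof.
rewrite /I0; case: Ktriv; first by rewrite inE.
by rewrite inE => /asboolP; apply.
Qed.

Lemma D_nonzero j : ~~ Ktriv -> j \in D -> exists v, X v /\ v j 0 != 0.
Proof.
rewrite /D /I0 => /negbTE -> ; rewrite !inE => /asboolPn nz.
apply: contrapT => hn; apply: nz => v Xv; apply: contrapT => vn.
by apply: hn; exists v; split => //; apply/eqP.
Qed.

Lemma Ktriv_one k : Ktriv -> k \in K -> k = 1.
Proof. by move=> /allP h /h /eqP. Qed.

Lemma Pi_partition : partition Pi D.
Proof. by apply: equivalence_partitionP => x y z _ _ _; exact: Rel_equiv. Qed.

Lemma Pi_block B : B \in Pi -> {subset B <= D} /\ {in B &, forall i j, Rel i j}.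
Proof.
case/imsetP => x xD ->; split => [y|i j]; first by rewrite inE => /andP[].
rewrite !inE => /andP[_ xi'] /andP[_ xj].
exact: Rel_trans (Rel_sym xi') xj.
Qed.


Definition F (j : 'I_n) : quat R := if j \in D then xi j else 1.

Lemma FK j : F j \in K. Proof. rewrite /F; case: ifP => _; [exact: xiK | exact: K1]. Qed.

Lemma conj_form (t : 'S_n) :
  Dxi I0 xi *m Mperm t *m Dxi_inv I0 xi =
  mono (fun i => F i * qinv (F ((t^-1)%g i))) t.
Proof.
rewrite /Dxi /Dxi_inv !diagA_mono Mperm_mono !mono_mul mulg1 mul1g.
apply: eq_mono => i; rewrite mulr1 /F /D.
by case: ifP => _; case: ifP => _; rewrite ?qinv1.
Qed.

Lemma factor_stab B (t : 'S_n) v : B \in Pi -> perm_on B t -> X v ->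
  mono (fun i => F i * qinv (F ((t^-1)%g i))) t *m v = v.
Proof.
move=> BPi tB Xv; have [BD Brel] := Pi_block BPi.
apply/matrixP => i k; rewrite (ord1 k) mono_vec.
case: (boolP (i \in B)) => iB; last first.
  by rewrite (out_perm (perm_onV tB) iB) qinv_r ?mul1r // K0 // FK.
have jB : (t^-1)%g i \in B by rewrite (perm_closed _ (perm_onV tB)).
have iD := BD _ iB; have jD := BD _ jB.
rewrite /F iD jD.
case: (xiP i) => _ hi; case: (xiP ((t^-1)%g i)) => _ hj.
rewrite hj // hi // (rep_eq iD (Brel _ _ iB jB)) -mulrA [qinv _ * _]mulrA.
by rewrite qinv_l ?mul1r // K0 // xiK.
Qed.

Lemma dir2 (g : 'M[quat R]_n) :
  P_triple K H I0 Pi xi g -> Gn K H g /\ forall v, X v -> g *m v = v.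
Proof.
case=> g0 [s [g0G sB ->]].
have [d0 [s0 [d0K d0I d0H s0I g0E]]] := G_on_form g0G.
split.
  apply: gen_mulmx; first by apply: (G_on_Gn (A := I0)); exact: g0G.
  apply: (big_ind (fun M => Gn K H M)).
  - exact: gen_one.
  - by move=> x y; exact: gen_mulmx.
  move=> B BPi; rewrite conj_form; apply: Gn_mono; first by move=> i; apply: KM; [exact: FK | apply: KV; exact: FK].
  exact: (Qlemma ((s B)^-1)%g FK).
move=> v Xv; rewrite -mulmxA.
have -> : (\prod_(B in Pi) (Dxi I0 xi *m Mperm (s B) *m Dxi_inv I0 xi)) *m v = v.
  apply: (big_ind (fun M : 'M[quat R]_n => M *m v = v)).
  - exact: mul1mx.
  - by move=> x y hx hy; rewrite -[x * y]/(x *m y) -mulmxA hy hx.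
  by move=> B BPi; rewrite conj_form; exact: (factor_stab BPi (sB B BPi) Xv).
rewrite g0E; apply/matrixP => i k; rewrite (ord1 k) mono_vec.
case: (boolP (i \in I0)) => iI.
  rewrite (I0_zero iI Xv) (I0_zero _ Xv) ?mulr0 //.
  by rewrite (perm_closed _ (perm_onV s0I)).
by rewrite d0I // mul1r (out_perm (perm_onV s0I) iI).
Qed.



Lemma inD i : (i \in D) = (i \notin I0). Proof. by rewrite inE. Qed.

Lemma Dxi_invK : Dxi_inv I0 xi *m Dxi I0 xi = 1%:M.
Proof.
rewrite /Dxi /Dxi_inv !diagA_mono mono_mul mulg1 -mono1; apply: eq_mono => i.
rewrite invg1 perm1; case: ifP => _; last by rewrite mulr1.
by rewrite qinv_l // K0 // xiK.
Qed.

Lemma DxiK : Dxi I0 xi *m Dxi_inv I0 xi = 1%:M.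
Proof.
rewrite /Dxi /Dxi_inv !diagA_mono mono_mul mulg1 -mono1; apply: eq_mono => i.
rewrite invg1 perm1; case: ifP => _; last by rewrite mulr1.
by rewrite qinv_r // K0 // xiK.
Qed.

Lemma dir1 (g : 'M[quat R]_n) :
  Gn K H g -> (forall v, X v -> g *m v = v) -> P_triple K H I0 Pi xi g.
Proof.
move=> gG stab.
have [d [s [dK _ dH _ gE]]] := G_on_form gG.
have st : forall v, X v -> forall a : 'I_n, v (s a) 0 = d (s a) * v a 0.
  move=> v Xv x; have := stab v Xv; rewrite gE => /matrixP /(_ (s x) 0).
  by rewrite mono_vec permK => e; exact/esym.
have stI0 : stable s I0.
  move=> y; rewrite /I0; case: ifP => kt; first by rewrite !inE.
  rewrite !inE; apply/asboolP/asboolP => h v Xv.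
  - have := st v Xv y; rewrite h // => /esym; exact: (qmulf_eq0 (K0 (dK _))).
  - by rewrite st // h // mulr0.
have stD : stable s D by move=> y; rewrite !inE stI0.
have relS : forall a : 'I_n, Rel (s a) a.
  by move=> y; apply/RelP; exists (d (s y)); split => // v Xv; exact: st.
have dval : forall i, i \in D -> d i = xi i * qinv (xi ((s^-1)%g i)).
  move=> i iD; set j := (s^-1)%g i.
  have ij : Rel i j by have := relS j; rewrite /j permKV.
  have jD : j \in D by rewrite -(stD j) /j permKV.
  case: (boolP Ktriv) => kt.
    by rewrite !(Ktriv_one kt (xiK _)) (Ktriv_one kt (dK i)) qinv1 mulr1.
  have [v [Xv vn]] := D_nonzero kt (rep_D iD).
  have e : xi i * v (rep i) 0 = d i * xi j * v (rep i) 0.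
    case: (xiP i) => _ hi; case: (xiP j) => _ hj.
    rewrite -hi // -mulrA (rep_eq iD ij) -hj //.
    by have := st v Xv j; rewrite /j permKV.
  have -> := qcancel_r vn e.
  by rewrite -mulrA qinv_r ?mulr1 // K0 // xiK.
have stB : forall B, B \in Pi -> stable s B.
  move=> B /imsetP [x xD ->] y; rewrite !inE stI0.
  case: (y \in I0) => //=.
  apply/idP/idP => h; [exact: Rel_trans h (relS y) | exact: Rel_trans h (Rel_sym (relS y))].
have sinvI0 : forall i, ((s^-1)%g i \in I0) = (i \in I0).
  by move=> i; rewrite -(stI0 ((s^-1)%g i)) permKV.
have H0prod : \prod_(i in I0) d i \in H.
  pose d'' := fun i => if i \in I0 then d i else 1.
  pose e := fun i => if i \in I0 then 1 else d i.
  have d''K : forall i, d'' i \in K by move=> i; rewrite /d''; case: ifP => _; [exact: dK | exact: K1].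
  have eK : forall i, e i \in K by move=> i; rewrite /e; case: ifP => _; [exact: K1 | exact: dK].
  have eH : \prod_i e i \in H.
    have -> : \prod_i e i = \prod_i (F i * qinv (F ((s^-1)%g i))).
      apply: eq_bigr => i _; rewrite /e /F !inD sinvI0.
      case: ifP => iI /=; first by rewrite qinv1 mulr1.
      by rewrite dval // inD iI.
    exact: (Qlemma (s^-1)%g FK).
  have sp := big_eqH_split (index_enum 'I_n) d''K eK.
  have : \prod_i (d'' i * e i) \in H.
    rewrite (eq_bigr d) // => i _; rewrite /d'' /e; case: ifP => _; by rewrite ?mulr1 ?mul1r.
  move=> /(eqH_inH sp) /H_div /(_ eH).
  move=> h; rewrite big_mkcond; exact: h.
exists (diagA I0 d *m Mperm (restr s I0)), (fun B => restr s B); split.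
- by apply: G_on_mono; [move=> i _; exact: dK | exact: H0prod | exact: restr_on].
- by move=> B _; exact: restr_on.
have mor : {morph (fun M => Dxi I0 xi *m M *m Dxi_inv I0 xi) : M N / M * N}.
  move=> M N /=; rewrite -[M * N]/(M *m N) -[_ * _]/(_ *m _).
  by rewrite !mulmxA -[Dxi I0 xi *m M *m Dxi_inv I0 xi *m Dxi I0 xi]mulmxA Dxi_invK mulmx1.
have mor1 : (fun M => Dxi I0 xi *m M *m Dxi_inv I0 xi) 1 = 1.
  by rewrite /= -[1 : 'M[quat R]_n]/(1%:M) mulmx1 DxiK.
rewrite -(big_morph _ mor mor1) -big_filter prod_restr; first last.
- move=> B C; rewrite !mem_filter => /andP[BP _] /andP[CP _] BC.
  by have [_ /trivIsetP tP _] := and3P Pi_partition; exact: tP.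
- by rewrite filter_uniq // index_enum_uniq.
- by move=> B; rewrite mem_filter => /andP[BP _]; exact: stB.
have -> : \bigcup_(B <- [seq B <- index_enum {set 'I_n} | B \in Pi]) B = D.
  rewrite big_filter; have [/eqP <- _ _] := and3P Pi_partition; done.
rewrite conj_form gE diagA_mono Mperm_mono !mono_mul.
have sE : (restr s D * (restr s I0 * 1))%g = s.
  rewrite mulg1; apply/permP => x; rewrite permM restrE // restrE // /rfun.
  rewrite inD; case: (boolP (x \in I0)) => xI /=; first by rewrite xI.
  by rewrite stI0 (negbTE xI).
rewrite sE; apply: eq_mono => i; rewrite mulg1 mulr1.
case: (boolP (i \in I0)) => iI.
  have e0 : (restr s I0)^-1%g i = (s^-1)%g i.
    apply: (@perm_inj _ (restr s I0)); rewrite permKV restrE // /rfun sinvI0 iI.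
    by rewrite permKV.
  have jD : (s^-1)%g i \notin D by rewrite inD sinvI0 iI.
  rewrite e0 (out_perm (perm_onV (restr_on _ _)) jD) /F (negbTE jD) qinv1 !mulr1.
  by [].
have e0 : (restr s I0)^-1%g i = i by rewrite (out_perm (perm_onV (restr_on _ _)) iI).
have iD : i \in D by rewrite inD.
have jD' : (s^-1)%g i \in D by rewrite -(stD ((s^-1)%g i)) permKV.
have e1 : (restr s D)^-1%g i = (s^-1)%g i.
  apply: (@perm_inj _ (restr s D)); rewrite permKV restrE // /rfun.
  by rewrite jD' permKV.
rewrite e0 e1 mul1r /F iD jD'.
by rewrite dval.
Qed.

End Grp.
End Quat.


Unset Implicit Arguments.
Set Strict Implicit.

Theorem proposition4p3 (R : realType) (n : nat) (K H : seq (quat R))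
    (P : 'M[quat R]_n -> Prop) :
  (3 <= n)%N ->
  is_fin_subgroup K -> is_fin_subgroup H ->
  qcomm_sub K H -> qnormal_sub H K ->
  parabolic K H P ->
  exists (I0 : {set 'I_n}) (Pi : {set {set 'I_n}}) (xi : 'I_n -> quat R),
    parabolic_triple K I0 Pi xi /\
    forall g, P g <-> P_triple K H I0 Pi xi g.
Proof.
move=> _ HK HH Hc Hn [X HX].
exists (I0 K X), (Pi K X), (xi K X); split.
  split.
  - move=> h; rewrite /I0; have -> : Ktriv K.
      by apply/allP => k /h ->.
    done.
  - exact: (Pi_partition HK).
  - by move=> j _; exact: (xiK HK).
move=> g; rewrite HX; split.
  by case=> gG st; exact: (dir1 HK HH Hc Hn).
by move/(dir2 HK HH Hc Hn) => [gG st]; split.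
Qed.
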